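(* Let $\Gamma$ be a fixed graph on $K$ vertices and assume $K=o(\sqrt n)$, $\mathbb{E}_0(X_\Gamma)=\omega(1)$ and $\mathbb{E}_0(L^2)=1+o(1)$. Define \[ \mathcal I_\Gamma=\frac{1}{X_\Gamma^2}\sum_{\Gamma',\Gamma''}\mathbf 1_{\Gamma'\cap\Gamma''\neq\emptyset}, \] where $\Gamma'$ and $\Gamma''$ range over all copies of $\Gamma$ in $G$ and $\Gamma'\cap\Gamma''\ne\emptyset$ means their vertex sets intersect (with $\mathcal I_\Gamma:=0$ when $X_\Gamma=0$). Then $\mathbb{E}_0(\mathcal I_\Gamma)=o(1)$.
   Context: Model: $n$ nodes, $\lambda>0$. $\mathbb{P}_0$: $G\sim\mathcal G(n,\lambda/n)$. $\mathbb{P}_1$: $G=G_0\cup G'$ with $G_0\sim\mathcal G(n,\lambda/n)$ and $G'$ the image of $\Gamma$ under a uniformly random injection of its vertex set into $[n]$ independent of $G_0$. $X_\Gamma$ is the number of copies (subgraphs isomorphic to $\Gamma$) of $\Gamma$ in $G$; $L=\mathbb{P}_1(G)/\mathbb{P}_0(G)$; $\mathbb{E}_0$ is expectation under $\mathbb{P}_0$. Asymptotics as $n\to\infty$. *)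

(* Defs.v *)
From HB Require Import structures.
From mathcomp Require Import all_boot all_order all_algebra.
Set Implicit Arguments. Unset Strict Implicit. Unset Printing Implicit Defensive.
Import Order.TTheory GRing.Theory Num.Theory.
Local Open Scope ring_scope.

(* A simple graph on vertex set 'I_n is given by its edge set: a set of
   2-element subsets of 'I_n. *)
Definition graph_on (n : nat) := {set {set 'I_n}}.

Definition is_graph (n : nat) (E : graph_on n) : bool :=
  [forall e in E, #|e| == 2]%N.

Definition img_edges (K n : nat) (f : {ffun 'I_K -> 'I_n}) (Gam : graph_on K)
  : graph_on n := [set [set f x | x in e] | e : {set 'I_K} in Gam].

(* Copies of Gam in G: subgraphs (V, F) of G isomorphic to Gam, i.e. images
   of Gam under an injection 'I_K -> 'I_n whose edges all lie in G. *)
Definition copies (K n : nat) (Gam : graph_on K) (G : graph_on n)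
  : {set ({set 'I_n} * graph_on n)} :=
  [set c | [exists f : {ffun 'I_K -> 'I_n},
     [&& injectiveb f, c.1 == [set f x | x in [set: 'I_K]],
         c.2 == img_edges f Gam & c.2 \subset G]]].

Definition X_count (K n : nat) (Gam : graph_on K) (G : graph_on n) : nat :=
  #|copies Gam G|.

Definition I_Gam {R : realFieldType} (K n : nat) (Gam : graph_on K)
  (G : graph_on n) : R :=
  let X := X_count Gam G in
  if X == 0%N then 0 else
  (#|[set pp in setX (copies Gam G) (copies Gam G)
        | pp.1.1 :&: pp.2.1 != set0]|%:R) / (X%:R ^+ 2).

Definition P0 {R : realFieldType} (n : nat) (p : R) (G : graph_on n) : R :=
  if is_graph G then p ^+ #|G| * (1 - p) ^+ ('C(n, 2) - #|G|) else 0.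

Definition E0 {R : realFieldType} (n : nat) (p : R) (F : graph_on n -> R) : R :=
  \sum_(G : graph_on n) P0 p G * F G.

(* Planted model: G = G0 ∪ sigma(Gam), G0 ~ G(n,p), sigma a uniform
   random injection 'I_K -> 'I_n independent of G0. *)
Definition P1 {R : realFieldType} (K n : nat) (p : R) (Gam : graph_on K)
  (G : graph_on n) : R :=
  (\sum_(f : {ffun 'I_K -> 'I_n} | injectiveb f)
     \sum_(G0 : graph_on n) P0 p G0 * ((G0 :|: img_edges f Gam) == G)%:R)
  / (#|[set f : {ffun 'I_K -> 'I_n} | injectiveb f]|%:R).

Definition Lratio {R : realFieldType} (K n : nat) (p : R) (Gam : graph_on K)
  (G : graph_on n) : R := P1 p Gam G / P0 p G.

(* Main.v *)
Require Import Defs.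
From HB Require Import structures.
From mathcomp Require Import all_boot all_order all_algebra.
From mathcomp Require all_classical all_reals all_analysis.
From mathcomp Require Import zify ring lra.
Import Order.TTheory GRing.Theory Num.Theory.
Set Implicit Arguments. Unset Strict Implicit. Unset Printing Implicit Defensive.
Local Open Scope ring_scope.

Lemma sum_subsets (R : comNzRingType) (T : finType) (U : {set T}) (q r : R) :
  \sum_(S : {set T} | S \subset U) q ^+ #|S| * r ^+ (#|U| - #|S|) = (r + q) ^+ #|U|.
Proof.
rewrite exprDn (partition_big (fun S : {set T} => (inord #|S| : 'I_(#|U|).+1)) predT) //=.
apply: eq_bigr => k _.
transitivity (\sum_(S : {set T} | (S \subset U) && (#|S| == k)) r ^+ (#|U| - k) * q ^+ k).
  apply: eq_big => S.
    case sSU: (S \subset U) => //=.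
    have hS : (#|S| < #|U|.+1)%N by rewrite ltnS subset_leq_card.
    apply/idP/idP => /eqP H; apply/eqP.
      by rewrite -H inordK.
    by apply: ord_inj; rewrite inordK.
  move=> /andP[sSU /eqP H].
  have -> : #|S| = k by rewrite -H inordK // ltnS subset_leq_card.
  by rewrite mulrC.
by rewrite sumr_const -cards_draws cardsE.
Qed.


Section ER.
Variable (R : realFieldType) (n : nat) (p : R).

Definition Ed : graph_on n := [set e : {set 'I_n} | #|e| == 2%N].

Lemma is_graphE (G : graph_on n) : is_graph G = (G \subset Ed).
Proof.
apply/forallP/subsetP => [H e eG|H e]; first by rewrite inE; have := H e; rewrite eG.
by apply/implyP => /H; rewrite inE.
Qed.

Lemma card_Ed : #|Ed| = 'C(n, 2).
Proof. by rewrite card_draws card_ord. Qed.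

Lemma P0E (G : graph_on n) : P0 p G =
  if G \subset Ed then p ^+ #|G| * (1 - p) ^+ (#|Ed| - #|G|) else 0.
Proof. by rewrite /P0 is_graphE card_Ed. Qed.

Lemma sumP (lo hi : graph_on n) : lo \subset hi -> hi \subset Ed ->
  \sum_(G : graph_on n) P0 p G * ((lo \subset G) && (G \subset hi))%:R
  = p ^+ #|lo| * (1 - p) ^+ (#|Ed| - #|hi|).
Proof.
move=> slh shE.
pose D := hi :\: lo.
have memE G : (G \in (fun S => lo :|: S) @: powerset D) = (lo \subset G) && (G \subset hi).
  apply/imsetP/andP => [[S] | [slG sGh]].
    rewrite powersetE => sSD ->; split; first exact: subsetUl.
    rewrite subUset slh /=; apply: subset_trans sSD _; exact: subsetDl.
  exists (G :\: lo); first by rewrite powersetE setSD.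
  apply/setP => x; rewrite !inE; case xl: (x \in lo) => //=.
  by rewrite (subsetP slG).
transitivity (\sum_(G in (fun S => lo :|: S) @: powerset D)
    p ^+ #|G| * (1 - p) ^+ (#|Ed| - #|G|)).
  rewrite [RHS]big_mkcond /=; apply: eq_bigr => G _.
  rewrite memE P0E; case: (lo \subset G) => /=; last by rewrite !mulr0.
  case sGh: (G \subset hi); last by rewrite mulr0.
  by rewrite (subset_trans sGh shE) mulr1.
have disj (S : graph_on n) : S \subset D -> lo :&: S = set0.
  move=> sSD; apply/setP => x; rewrite !inE; case xl: (x \in lo) => //=.
  by apply/negP => /(subsetP sSD); rewrite inE xl.
rewrite big_imset /=; last first.
  move=> S1 S2; rewrite !powersetE => s1 s2 E.
  apply/setP => x; have := congr1 (fun A : graph_on n => x \in A) E; rewrite /= !inE.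
  case xl: (x \in lo) => //=.
  have /setP/(_ x) := disj _ s1; have /setP/(_ x) := disj _ s2.
  by rewrite !inE xl /= => -> ->.
have cD : #|hi| = (#|lo| + #|D|)%N.
  by rewrite -(cardsID lo hi) (setIidPr slh).
have chE : (#|hi| <= #|Ed|)%N by exact: subset_leq_card.
transitivity (\sum_(S in powerset D) (p ^+ #|lo| * (1 - p) ^+ (#|Ed| - #|hi|)) *
   (p ^+ #|S| * (1 - p) ^+ (#|D| - #|S|))).
  apply: eq_bigr => S; rewrite powersetE => sSD.
  have cS : #|lo :|: S| = (#|lo| + #|S|)%N by rewrite cardsU disj // cards0 subn0.
  have cSD : (#|S| <= #|D|)%N by exact: subset_leq_card.
  rewrite cS exprD.
  have -> : (#|Ed| - (#|lo| + #|S|) = (#|Ed| - #|hi|) + (#|D| - #|S|))%N by lia.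
  by rewrite exprD mulrACA.
rewrite -big_distrr /= -[RHS]mulr1; congr (_ * _).
transitivity (\sum_(S : graph_on n | S \subset D) p ^+ #|S| * (1 - p) ^+ (#|D| - #|S|)).
  by apply: eq_bigl => S; rewrite powersetE.
by rewrite sum_subsets subrK expr1n.
Qed.

End ER.

Section ER2.
Variable (R : realFieldType) (n : nat) (p : R).

Lemma sum_P0 : \sum_(G : graph_on n) P0 p G = 1.
Proof.
rewrite -[RHS](_ : p ^+ #|(set0 : graph_on n)| * (1 - p) ^+ (#|Ed n| - #|Ed n|) = 1); last first.
  by rewrite cards0 subnn !expr0 mulr1.
rewrite -(sumP p (sub0set _) (subxx _)); apply: eq_bigr => G _.
rewrite sub0set /=; case sGE: (G \subset Ed n); first by rewrite mulr1.
by rewrite P0E sGE !mul0r.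
Qed.

Lemma sum_P0_sub (A : graph_on n) : A \subset Ed n ->
  \sum_(G : graph_on n) P0 p G * (A \subset G)%:R = p ^+ #|A|.
Proof.
move=> sAE.
have -> : p ^+ #|A| = p ^+ #|A| * (1 - p) ^+ (#|Ed n| - #|Ed n|) by rewrite subnn mulr1.
rewrite -(sumP p sAE (subxx _)); apply: eq_bigr => G _.
case sGE: (G \subset Ed n); first by rewrite andbT.
by rewrite P0E sGE !mul0r.
Qed.

Lemma sum_P1 (A G : graph_on n) : 0 < p -> A \subset G -> G \subset Ed n ->
  \sum_(G0 : graph_on n) P0 p G0 * ((G0 :|: A) == G)%:R = P0 p G / p ^+ #|A|.
Proof.
move=> p0 sAG sGE.
have -> : \sum_(G0 : graph_on n) P0 p G0 * ((G0 :|: A) == G)%:R =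
   \sum_(G0 : graph_on n) P0 p G0 * (((G :\: A) \subset G0) && (G0 \subset G))%:R.
  apply: eq_bigr => G0 _; congr (_ * _%:R).
  congr (nat_of_bool _); apply/idP/idP => [/eqP <- | /andP[s1 s2]]; [apply/andP | apply/eqP].
    split; last exact: subsetUl.
    apply/subsetP => x; rewrite !inE; case: (x \in A) => //=; by rewrite orbF.
  apply/setP => x; rewrite !inE; apply/idP/idP.
    by case/orP => [/(subsetP s2) | /(subsetP sAG)].
  move=> xG; case xA: (x \in A); first by rewrite orbT.
  by rewrite (subsetP s1) // !inE xA xG.
rewrite sumP ?subsetDl // P0E sGE.
have cG : #|G| = (#|A| + #|G :\: A|)%N by rewrite -(cardsID A G) (setIidPr sAG).
rewrite [in p ^+ #|G|]cG exprD [RHS]mulrAC [in RHS](mulrAC (p ^+ #|A|)) mulfV ?mul1r //.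
by rewrite expf_neq0 // gt_eqF.
Qed.

Lemma sum_P1_0 (A G : graph_on n) : ~~ (A \subset G) ->
  \sum_(G0 : graph_on n) P0 p G0 * ((G0 :|: A) == G)%:R = 0.
Proof.
move=> nAG; apply: big1 => G0 _.
case: eqP => [E|]; last by rewrite mulr0.
by move: nAG; rewrite -E subsetUr.
Qed.

End ER2.


Section Emb.
Variables (n K : nat) (Gam : graph_on K).
Hypothesis hGam : is_graph Gam.
Local Notation F := {ffun 'I_K -> 'I_n}.

Definition im (f : F) : {set 'I_n} := [set f x | x in [set: 'I_K]].
Definition Af (f : F) : graph_on n := img_edges f Gam.
Definition key (f : F) := (im f, Af f).

Lemma Af_Ed (f : F) : injectiveb f -> Af f \subset Ed n.
Proof.
move=> /injectiveP fi; apply/subsetP => x /imsetP[e eG ->].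
rewrite inE card_imset //.
by have := forallP hGam e; rewrite eG.
Qed.

Lemma img_edges_inj (T : finType) (f0 : 'I_K -> T) : injective f0 ->
  injective (fun X : {set {set 'I_K}} => [set [set f0 x | x in e] | e : {set 'I_K} in X]).
Proof. by move=> fi; apply: imset_inj; apply: imset_inj. Qed.

Lemma card_Af (f : F) : injectiveb f -> #|Af f| = #|Gam|.
Proof. by move=> /injectiveP fi; rewrite /Af /img_edges card_imset //; apply: imset_inj. Qed.

Lemma Af_im (f : F) x : x \in Af f -> x \subset im f.
Proof.
move=> /imsetP[e eG ->]; apply/subsetP => y /imsetP[z zE ->].
by apply/imsetP; exists z; rewrite ?inE.
Qed.

Lemma disj_Af (f g : F) : im f :&: im g = set0 -> Af f :&: Af g = set0.
Proof.
move=> D; apply/setP => x; rewrite !inE; apply/negP => /andP[xf xg].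
have := xf => /imsetP[e eG xE].
have /card_gt0P[y ye] : (0 < #|e|)%N by have := forallP hGam e; rewrite eG => /eqP ->.
have fy : f y \in x by rewrite xE; apply/imsetP; exists y.
have /setP/(_ (f y)) := D; rewrite !inE (subsetP (Af_im xf)) ?(subsetP (Af_im xg)) //.
Qed.

Definition Aut := [set h : {ffun 'I_K -> 'I_K} | injectiveb h && (img_edges h Gam == Gam)].
Definition comp (f0 : F) (h : {ffun 'I_K -> 'I_K}) : F := [ffun x => f0 (h x)].

Lemma img_edges_comp (f0 : F) (h : {ffun 'I_K -> 'I_K}) : img_edges (comp f0 h) Gam = img_edges f0 (img_edges h Gam).
Proof.
rewrite /img_edges -imset_comp; apply: eq_imset => e /=.
by rewrite -imset_comp; apply: eq_imset => x /=; rewrite ffunE.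
Qed.

Lemma fib_card (f0 : F) : injectiveb f0 ->
  #|[set f : F | injectiveb f && (key f == key f0)]| = #|Aut|.
Proof.
move=> /injectiveP inj0.
have -> : [set f : F | injectiveb f && (key f == key f0)] = comp f0 @: Aut.
  apply/setP => f; rewrite inE; apply/andP/imsetP.
    case=> /injectiveP injf /eqP [eim eA].
    pose h := [ffun x => odflt x [pick y | f0 y == f x]].
    have hf x : f0 (h x) = f x.
      rewrite ffunE; case: pickP => [y /eqP //| none].
      have : f x \in im f0 by rewrite -eim; apply/imsetP; exists x; rewrite ?inE.
      by case/imsetP => y _ E; have := none y; rewrite E eqxx.
    have fE : f = comp f0 h by apply/ffunP => x; rewrite ffunE hf.
    exists h => //; rewrite inE; apply/andP; split.
      by apply/injectiveP => x1 x2 E; apply: injf; rewrite -!hf E.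
    apply/eqP; apply: (img_edges_inj inj0).
    change (img_edges f0 (img_edges h Gam) = img_edges f0 Gam).
    by rewrite -img_edges_comp -fE.
  case=> h; rewrite inE => /andP[/injectiveP hi /eqP hA] ->; split.
    by apply/injectiveP => x y; rewrite !ffunE => /inj0 /hi.
  have hT : [set h x | x in [set: 'I_K]] = [set: 'I_K].
    by apply/eqP; rewrite eqEcard subsetT card_imset ?leqnn.
  rewrite /key /Af img_edges_comp hA; apply/eqP; congr (_, _).
  rewrite /im -[in RHS]hT -imset_comp; apply: eq_imset => x /=; by rewrite ffunE.
rewrite card_imset // => h1 h2 E; apply/ffunP => x.
by apply: inj0; move/ffunP: E => /(_ x); rewrite !ffunE.
Qed.

Lemma mem_copies (G : graph_on n) c :
  reflect (exists f : F, [/\ injectiveb f, c = key f & Af f \subset G])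
          (c \in copies Gam G).
Proof.
rewrite inE; apply: (iffP existsP) => [[f /and4P[fi /eqP e1 /eqP e2 sG]] | [f [fi -> sG]]].
  exists f; split => //; last by rewrite /Af -e2.
  by case: c e1 e2 sG => ? ? /= -> ->.
by exists f; rewrite fi /= !eqxx.
Qed.

Lemma fib_copies (G : graph_on n) c : c \in copies Gam G ->
  #|[set f : F | injectiveb f && (key f == c)]| = #|Aut|.
Proof. by case/mem_copies => f0 [fi -> _]; exact: fib_card. Qed.

Lemma Zc_eq (G : graph_on n) :
  #|[set f : F | injectiveb f && (Af f \subset G)]| = (#|Aut| * X_count Gam G)%N.
Proof.
rewrite -sum1dep_card (partition_big key (mem (copies Gam G))) /=; last first.
  by move=> f /andP[fi fG]; apply/mem_copies; exists f.
rewrite /X_count mulnC -sum_nat_const; apply: eq_bigr => c cC.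
rewrite sum1dep_card -(fib_copies cC); apply: eq_card => f; rewrite !inE.
case: (injectiveb f) => //=; case: eqP => [E|]; last by rewrite andbF.
case/mem_copies: cC E => f0 [_ -> sG] [_ ->]; by rewrite andbT.
Qed.

Definition Yset (G : graph_on n) :=
  [set pp in setX (copies Gam G) (copies Gam G) | pp.1.1 :&: pp.2.1 != set0].

Lemma Wc_eq (G : graph_on n) :
  #|[set fg : F * F | [&& injectiveb fg.1, Af fg.1 \subset G, injectiveb fg.2,
       Af fg.2 \subset G & im fg.1 :&: im fg.2 != set0]]|
  = (#|Aut| * #|Aut| * #|Yset G|)%N.
Proof.
rewrite -sum1dep_card (partition_big (fun fg => (key fg.1, key fg.2)) (mem (Yset G))) /=; last first.
  move=> [f g] /and5P[fi fG gi gG fgI]; apply/setIdP; split => //.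
  by apply/setXP; split; apply/mem_copies; [exists f | exists g].
rewrite mulnC -sum_nat_const; apply: eq_bigr => [[c d]] cdY.
have /setIdP[/setXP[/= cC dC] cdI] := cdY.
rewrite sum1dep_card -[X in (X * _)%N](fib_copies cC) -[X in (_ * X)%N](fib_copies dC) -cardsX; apply: eq_card => [[f g]].
rewrite !inE /= xpair_eqE.
case: (injectiveb f) => //=.
case: (injectiveb g); rewrite ?andbF //=.
case: (key f =P c) => [Ef|]; rewrite ?andbF //=.
case: (key g =P d) => [Eg|]; rewrite ?andbF //=.
case/mem_copies: cC Ef cdI => f0 [_ -> sG0] [Ei Ea].
case/mem_copies: dC Eg => g0 [_ -> sG1] [Gi Ga] /= cdI.
by rewrite Ea Ga sG0 sG1 Ei Gi cdI.
Qed.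

End Emb.


Lemma sum_ind (R : nzSemiRingType) (T : finType) (P : pred T) :
  \sum_(x : T) (P x)%:R = #|[set x | P x]|%:R :> R.
Proof.
rewrite -sum1dep_card natr_sum [RHS]big_mkcond /=.
by apply: eq_bigr => x _; case: (P x).
Qed.

Section Fun.
Variables (R : realFieldType) (n K : nat) (Gam : graph_on K).
Hypothesis hGam : is_graph Gam.
Local Notation F := {ffun 'I_K -> 'I_n}.

Definition ind (f : F) (G : graph_on n) : R := (injectiveb f && (Af Gam f \subset G))%:R.
Definition Zf (G : graph_on n) : R := \sum_(f : F) ind f G.
Definition Wf (G : graph_on n) : R :=
  \sum_(f : F) \sum_(g : F) ind f G * ind g G * (im f :&: im g != set0)%:R.
Definition Vf (G : graph_on n) : R :=
  \sum_(f : F) \sum_(g : F) ind f G * ind g G * (im f :&: im g == set0)%:R.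
Definition Ninj : nat := #|[set f : F | injectiveb f]|.

Lemma ZW G : Zf G ^+ 2 = Wf G + Vf G.
Proof.
rewrite expr2 /Zf mulr_suml /Wf /Vf -big_split; apply: eq_bigr => f _ /=.
rewrite mulr_sumr -big_split; apply: eq_bigr => g _ /=.
by case: (_ == set0); rewrite /= ?mulr0 ?mulr1 ?addr0 ?add0r.
Qed.

Lemma ind_ge0 f G : 0 <= ind f G. Proof. exact: ler0n. Qed.

Lemma Vf_ge0 G : 0 <= Vf G.
Proof. by apply: sumr_ge0 => f _; apply: sumr_ge0 => g _; rewrite !mulr_ge0 ?ind_ge0 ?ler0n. Qed.
Lemma Wf_ge0 G : 0 <= Wf G.
Proof. by apply: sumr_ge0 => f _; apply: sumr_ge0 => g _; rewrite !mulr_ge0 ?ind_ge0 ?ler0n. Qed.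
Lemma Zf_ge0 G : 0 <= Zf G.
Proof. by apply: sumr_ge0 => f _; exact: ind_ge0. Qed.

Lemma Zf_card G : Zf G = #|[set f : F | injectiveb f && (Af Gam f \subset G)]|%:R.
Proof. exact: sum_ind. Qed.

Lemma Wf_card G : Wf G = #|[set fg : F * F | [&& injectiveb fg.1, Af Gam fg.1 \subset G,
   injectiveb fg.2, Af Gam fg.2 \subset G & im fg.1 :&: im fg.2 != set0]]|%:R.
Proof.
rewrite /Wf pair_bigA /= -sum_ind; apply: eq_bigr => [[f g]] _ /=.
rewrite /ind; case: (injectiveb f); case: (injectiveb g); rewrite /= ?mul0r ?mulr0 //.
case: (Af Gam f \subset G); case: (Af Gam g \subset G); rewrite /= ?mul0r ?mulr0 ?mul1r.
all: try by rewrite ?mul0r ?mul1r.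
all: by rewrite ?andbF ?mul0r.
Qed.

Lemma Aut_gt0 : (0 < #|Aut Gam|)%N.
Proof.
apply/card_gt0P; exists [ffun x => x]; rewrite inE; apply/andP; split.
  by apply/injectiveP => x y; rewrite !ffunE.
apply/eqP; rewrite /img_edges -[RHS]imset_id; apply: eq_imset => e /=.
by rewrite -[RHS]imset_id; apply: eq_imset => x; rewrite ffunE.
Qed.

Lemma I_eq G : I_Gam Gam G = Wf G / Zf G ^+ 2 :> R.
Proof.
rewrite /I_Gam Wf_card Zf_card Zc_eq // Wc_eq //.
have a0 : (#|Aut Gam|%:R : R) != 0 by rewrite pnatr_eq0 -lt0n Aut_gt0.
case: eqP => [->|/eqP X0]; first by rewrite muln0 expr0n /= invr0 mulr0.
rewrite !natrM exprMn -mulf_div expr2 mulfV ?mul1r //.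
by rewrite mulf_neq0.
Qed.

Lemma Wf_le G : Wf G <= Zf G ^+ 2.
Proof. by rewrite ZW lerDl Vf_ge0. Qed.

Lemma E0_lin (p : R) (a b c d : R) (F1 F2 F3 : graph_on n -> R) :
  E0 p (fun G => a * F1 G + b * F2 G + c * F3 G + d) =
  a * E0 p F1 + b * E0 p F2 + c * E0 p F3 + d * E0 p (fun _ : graph_on n => 1).
Proof.
rewrite /E0 !mulr_sumr -!big_split; apply: eq_bigr => G _ /=; ring.
Qed.

Lemma E0_le (p : R) (F1 F2 : graph_on n -> R) : 0 <= p -> p <= 1 ->
  (forall G, F1 G <= F2 G) -> E0 p F1 <= E0 p F2.
Proof.
move=> p0 p1 H; apply: ler_sum => G _; apply: ler_wpM2l => //.
rewrite /P0; case: ifP => // _; apply: mulr_ge0; apply: exprn_ge0; lra.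
Qed.

End Fun.


Lemma pt_bound (R : realFieldType) (mu z w v : R) : 0 < mu -> 0 <= w -> 0 <= v ->
  z ^+ 2 = w + v -> 0 <= z ->
  w / z ^+ 2 <= 4 / mu ^+ 2 * w + 4 / mu ^+ 2 * (z - mu) ^+ 2.
Proof.
move=> mu0 w0 v0 zE z0.
have c0 : 0 <= 4 / mu ^+ 2 by rewrite divr_ge0 // exprn_ge0 // ltW.
have [->|zn0] := eqVneq z 0.
  rewrite expr0n /= invr0 mulr0.
  have := sqr_ge0 (0 - mu); nra.
have z2 : 0 < z ^+ 2 by rewrite exprn_gt0 // lt_def zn0.
have m2 : 0 < mu ^+ 2 by rewrite exprn_gt0.
rewrite ler_pdivrMr //.
have -> : (4 / mu ^+ 2 * w + 4 / mu ^+ 2 * (z - mu) ^+ 2) * z ^+ 2 =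
   (4 * (w + (z - mu) ^+ 2) * z ^+ 2) / mu ^+ 2.
  ring.
rewrite ler_pdivlMr //.
have wz : w <= z ^+ 2 by rewrite zE lerDl.
have [h|h] := lerP mu (2 * z).
  have h2 : 0 <= (2 * z - mu) * (2 * z + mu) by apply: mulr_ge0; lra.
  have h3 : mu ^+ 2 <= 4 * z ^+ 2 by nra.
  have h4 : 0 <= w * (4 * z ^+ 2 - mu ^+ 2) by apply: mulr_ge0; lra.
  have h5 : 0 <= (z - mu) ^+ 2 * z ^+ 2 by apply: mulr_ge0; apply: sqr_ge0.
  nra.
have h2 : 0 <= (mu - 2 * z) * (3 * mu - 2 * z) by apply: mulr_ge0; lra.
have h3 : mu ^+ 2 <= 4 * (z - mu) ^+ 2 by nra.
have h4 : 0 <= z ^+ 2 * (4 * (z - mu) ^+ 2 - mu ^+ 2) by apply: mulr_ge0; [apply: sqr_ge0| lra].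
have h5 : 0 <= mu ^+ 2 * (z ^+ 2 - w) by apply: mulr_ge0; [apply: sqr_ge0| lra].
have h6 : 0 <= w * z ^+ 2 by apply: mulr_ge0 => //; apply: sqr_ge0.
nra.
Qed.

Section Exp.
Variables (R : realFieldType) (n K : nat) (Gam : graph_on K).
Hypothesis hGam : is_graph Gam.
Variable p : R.
Hypotheses (hp0 : 0 < p) (hp1 : p < 1).
Local Notation F := {ffun 'I_K -> 'I_n}.

Lemma E0_Z : E0 p (@Zf R n K Gam) = (Ninj n K)%:R * p ^+ #|Gam|.
Proof.
rewrite /E0 /Zf.
under eq_bigr do rewrite mulr_sumr.
rewrite exchange_big /=.
transitivity (\sum_(f : F) (injectiveb f)%:R * p ^+ #|Gam|).
  apply: eq_bigr => f _; rewrite /ind; case fi: (injectiveb f) => /=.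
    by rewrite mul1r -(card_Af Gam fi) -(sum_P0_sub p (Af_Ed hGam fi)).
  by rewrite big1 ?mul0r // => G _; rewrite mulr0.
by rewrite -mulr_suml sum_ind.
Qed.

Lemma card_disj (f : F) : injectiveb f ->
  #|[set g : F | injectiveb g && (im f :&: im g == set0)]| = (n - K) ^_ K.
Proof.
move=> /injectiveP fi.
have cim : #|im f| = K by rewrite card_imset // cardsT card_ord.
have cC : #|[pred y | y \notin im f]| = (n - K)%N.
  have h := cardsC (im f); rewrite card_ord cim in h.
  have e1 : #|[pred y | y \notin im f]| = #|~: im f|.
    by rewrite cardsE; apply: eq_card => y; rewrite !inE.
  rewrite e1; move: (#|~: im f|) h => a h; lia.
transitivity (#|[set g : F in ffun_on [pred y | y \notin im f] | injectiveb g]|); last first.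
  by rewrite card_inj_ffuns_on card_ord cC.
apply: eq_card => g; rewrite !inE andbC.
congr (_ && _); apply/eqP/forallP => [H x|H].
  rewrite inE; apply/negP => gxf; have /setP/(_ (g x)) := H.
  by rewrite !inE gxf /=; move/negP; apply; apply/imsetP; exists x.
apply/setP => y; rewrite !inE; apply/negP => /andP[yf /imsetP[x _ yE]].
by have := H x; rewrite inE -yE yf.
Qed.

Lemma E0_V : E0 p (@Vf R n K Gam) = (Ninj n K)%:R * ((n - K) ^_ K)%:R * p ^+ (2 * #|Gam|).
Proof.
rewrite /E0 /Vf.
under eq_bigr do rewrite mulr_sumr.
rewrite exchange_big /=.
transitivity (\sum_(f : F) \sum_(g : F)
   (injectiveb f && injectiveb g && (im f :&: im g == set0))%:R * p ^+ (2 * #|Gam|)).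
  apply: eq_bigr => f _.
  under eq_bigr do rewrite mulr_sumr.
  rewrite exchange_big /=; apply: eq_bigr => g _.
  case fi: (injectiveb f); last first.
    by rewrite big1 ?mul0r // => G _; rewrite /ind fi /= !mul0r mulr0.
  case gi: (injectiveb g); last first.
    by rewrite big1 ?mul0r // => G _; rewrite /ind gi /= mulr0 mul0r mulr0.
  case: eqP => [D|_]; last first.
    by rewrite big1 ?mul0r // => G _; rewrite mulr0 mulr0.
  rewrite /= mul1r.
  have sE : Af Gam f :|: Af Gam g \subset Ed n by rewrite subUset !Af_Ed.
  have cU : #|Af Gam f :|: Af Gam g| = (2 * #|Gam|)%N.
    by rewrite cardsU (disj_Af hGam D) cards0 subn0 !card_Af // mul2n addnn.
  rewrite -cU -(sum_P0_sub p sE); apply: eq_bigr => G _.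
  rewrite /ind fi gi /= subUset mulr1.
  case: (Af Gam f \subset G); case: (Af Gam g \subset G); rewrite /= ?mulr0 ?mulr1. all: try by rewrite ?mulr0 ?mul0r ?mulr1.
under eq_bigr do rewrite -mulr_suml.
rewrite -mulr_suml; congr (_ * _).
transitivity (\sum_(f : F) (injectiveb f)%:R * ((n - K) ^_ K)%:R : R).
  apply: eq_bigr => f _; case fi: (injectiveb f) => /=; last first.
    by rewrite mul0r big1.
  by rewrite mul1r sum_ind card_disj.
by rewrite -mulr_suml sum_ind.
Qed.

Lemma P0_pos (G : graph_on n) : G \subset Ed n -> 0 < P0 p G.
Proof. by move=> sG; rewrite P0E sG mulr_gt0 // exprn_gt0 // subr_gt0. Qed.

Lemma P1_eq (G : graph_on n) : G \subset Ed n ->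
  P1 p Gam G = P0 p G * Zf R Gam G / ((Ninj n K)%:R * p ^+ #|Gam|).
Proof.
move=> sGE; rewrite /P1.
have -> : \sum_(f : F | injectiveb f) \sum_(G0 : graph_on n)
    P0 p G0 * ((G0 :|: img_edges f Gam) == G)%:R = Zf R Gam G * (P0 p G / p ^+ #|Gam|).
  rewrite /Zf mulr_suml big_mkcond; apply: eq_bigr => f _ /=.
  rewrite /ind; case fi: (injectiveb f) => /=; last by rewrite mul0r.
  case sG: (Af Gam f \subset G) => /=.
    by rewrite mul1r -(card_Af Gam fi) sum_P1.
  by rewrite mul0r sum_P1_0 // sG.
rewrite /Ninj invfM; move: (p ^+ #|Gam|) (Zf R Gam G) (P0 p G) ((#|_|)%:R : R) => a b c d; ring.
Qed.

Lemma E0_L2 : (0 < Ninj n K)%N ->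
  E0 p (fun G : graph_on n => Lratio p Gam G ^+ 2) =
  E0 p (fun G : graph_on n => Zf R Gam G ^+ 2) / ((Ninj n K)%:R * p ^+ #|Gam|) ^+ 2.
Proof.
move=> N0; rewrite /E0 mulr_suml; apply: eq_bigr => G _.
case sG : (G \subset Ed n); last by rewrite P0E sG !mul0r.
have P0n : P0 p G != 0 by rewrite gt_eqF // P0_pos.
rewrite /Lratio P1_eq //.
have mun : (Ninj n K)%:R * p ^+ #|Gam| != 0.
  by rewrite mulf_neq0 // ?pnatr_eq0 -?lt0n // expf_neq0 // gt_eqF.
move: mun P0n; move: ((Ninj n K)%:R * p ^+ #|Gam|) (Zf R Gam G) (P0 p G) => a b c an cn.
by field; rewrite an cn.
Qed.

Lemma main_bound : (0 < Ninj n K)%N ->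
  E0 p (fun G : graph_on n => I_Gam Gam G : R) <=
  8 * (E0 p (fun G : graph_on n => Lratio p Gam G ^+ 2) - 1) +
  4 * (1 - ((n - K) ^_ K)%:R / (Ninj n K)%:R).
Proof.
move=> N0.
set mu := (Ninj n K)%:R * p ^+ #|Gam|.
have mu0 : 0 < mu by rewrite mulr_gt0 ?ltr0n // exprn_gt0.
have mun : mu != 0 by rewrite gt_eqF.
apply: le_trans (E0_le (F2 := fun G => (8 / mu ^+ 2) * Zf R Gam G ^+ 2 +
     (- (4 / mu ^+ 2)) * Vf R Gam G + (- (8 / mu)) * Zf R Gam G + 4) _ _ _) _.
- exact: ltW.
- exact: ltW.
- move=> G; rewrite I_eq.
  apply: le_trans (pt_bound mu0 (Wf_ge0 R Gam G) (Vf_ge0 R Gam G) (ZW R Gam G) (Zf_ge0 R Gam G)) _.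
  rewrite le_eqVlt; apply/orP; left; apply/eqP.
  have -> : Wf R Gam G = Zf R Gam G ^+ 2 - Vf R Gam G by rewrite ZW addrK.
  move: mun (Zf R Gam G) (Vf R Gam G); clear; move: mu => m mn z v.
  by field.
rewrite E0_lin E0_L2 // E0_Z E0_V.
rewrite (_ : E0 p (fun _ : graph_on n => 1) = 1); last first.
  by rewrite /E0 (eq_bigr (fun G => P0 p G)) ?sum_P0 // => G _; rewrite mulr1.
rewrite le_eqVlt; apply/orP; left; apply/eqP.
rewrite -/mu mulnC exprM.
have Nn : (Ninj n K)%:R != 0 :> R by rewrite pnatr_eq0 -lt0n.
have pn : p ^+ #|Gam| != 0 by rewrite expf_neq0 // gt_eqF.
rewrite /mu; move: Nn pn (E0 _ _); move: (p ^+ #|Gam|) ((Ninj n K)%:R : R) => a b bn an c.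
by field; rewrite bn an.
Qed.

End Exp.


Lemma weier (R : realFieldType) m (x : nat -> R) :
  (forall i, (i < m)%N -> 0 <= x i <= 1) ->
  1 - \sum_(i < m) x i <= \prod_(i < m) (1 - x i).
Proof.
elim: m => [|m IH] H; first by rewrite big_ord0 big_ord0 subr0.
rewrite !big_ord_recr /=.
have IH' := IH (fun i hi => H i (ltnW hi)).
have /andP[y0 y1] := H m (ltnSn m).
have P0 : 0 <= \prod_(i < m) (1 - x i).
  apply: prodr_ge0 => i _; have /andP[_ h] := H i (ltnW (ltn_ord i)); lra.
have S0 : 0 <= \sum_(i < m) x i.
  by apply: sumr_ge0 => i _; have /andP[h _] := H i (ltnW (ltn_ord i)).
move: IH' P0 S0; set P := \prod_(i < m) _; set S := \sum_(i < m) _ => IH' P0 S0.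
nra.
Qed.

Lemma ratio_bound (R : realFieldType) n K : (0 < n)%N -> (2 * K <= n)%N ->
  1 - ((n - K) ^_ K)%:R / (n ^_ K)%:R <= 2 * K%:R ^+ 2 / n%:R :> R.
Proof.
move=> n0 hK.
pose x i : R := K%:R / (n - i)%:R.
have eq : ((n - K) ^_ K)%:R / (n ^_ K)%:R = \prod_(i < K) (1 - x i) :> R.
  rewrite !ffact_prod !natr_prod -prodfV -big_split /=; apply: eq_bigr => i _.
  have hi := ltn_ord i.
  have -> : (n - K - i = (n - i) - K)%N by lia.
  have dn : (n - i)%:R != 0 :> R by rewrite pnatr_eq0; lia.
  rewrite natrB; last by lia.
  rewrite /x; move: dn; move: ((n - i)%:R : R) => d dn; by field.
have hx i : (i < K)%N -> 0 <= x i <= 1 /\ x i <= 2 * K%:R / n%:R.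
  move=> hi.
  have d0 : 0 < (n - i)%:R :> R by rewrite ltr0n; lia.
  have N0 : 0 < n%:R :> R by rewrite ltr0n.
  have kd : K%:R <= (n - i)%:R :> R by rewrite ler_nat; lia.
  have Nd : n%:R <= 2 * (n - i)%:R :> R by rewrite -natrM ler_nat; lia.
  have k0 : 0 <= K%:R :> R by rewrite ler0n.
  split; first by rewrite /x divr_ge0 ?ler0n //= ler_pdivrMr // mul1r.
  rewrite /x ler_pdivrMr // mulrAC ler_pdivlMr //.
  nra.
rewrite eq.
have W := weier (fun i hi => proj1 (hx i hi)).
apply: le_trans (_ : \sum_(i < K) x i <= _); first lra.
apply: le_trans; first by apply: ler_sum => i _; exact: proj2 (hx i (ltn_ord i)).
rewrite sumr_const card_ord -(mulr_natr (2 * K%:R / n%:R) K).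
rewrite le_eqVlt; apply/orP; left; apply/eqP.
move: (K%:R : R) => k. rewrite expr2; ring.
Qed.

From mathcomp Require Import all_classical all_reals all_analysis.
Import Order.TTheory GRing.Theory Num.Theory numFieldNormedType.Exports.

Lemma bound_n (R : realFieldType) (lam : R) n K (Gam : graph_on K) :
  is_graph Gam -> 0 < lam -> (0 < n)%N -> lam < n%:R -> (2 * K <= n)%N ->
  0 <= E0 (lam / n%:R) (fun G : graph_on n => I_Gam Gam G : R) <=
  8 * (E0 (lam / n%:R) (fun G : graph_on n => Lratio (lam / n%:R) Gam G ^+ 2) - 1)
  + 8 * (K%:R ^+ 2 / n%:R).
Proof.
move=> hG lam0 n0 nl hK.
have N0 : (0 < n%:R :> R) by rewrite ltr0n.
have p0 : 0 < lam / n%:R by rewrite divr_gt0.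
have p1 : lam / n%:R < 1 by rewrite ltr_pdivrMr // mul1r.
apply/andP; split.
  apply: sumr_ge0 => G _; apply: mulr_ge0.
    rewrite /P0; case: ifP => // _; move: p0 p1; move: (lam / n%:R) => q q0 q1.
    by apply: mulr_ge0; apply: exprn_ge0; lra.
  by rewrite /I_Gam; case: ifP => _ //; apply: divr_ge0; rewrite ?exprn_ge0 ?ler0n.
have Nn : (0 < Ninj n K)%N by rewrite /Ninj card_inj_ffuns !card_ord ffact_gt0; lia.
apply: le_trans (main_bound hG p0 p1 Nn) _.
have := ratio_bound R n0 hK; rewrite /Ninj card_inj_ffuns !card_ord.
rewrite -mulrA; lra.
Qed.

Unset Implicit Arguments.
Local Open Scope classical_set_scope.
Local Open Scope ring_scope.

Theorem lemma10 (R : realType) (lam : R) (K : nat -> nat)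
  (Gam : forall n : nat, graph_on (K n)) :
  0 < lam ->
  (forall n, is_graph (Gam n)) ->
  (* K = o(sqrt n) *)
  ((K n)%:R / Num.sqrt (n%:R : R)) @[n --> \oo] --> 0 ->
  (* E_0(X_Gamma) = omega(1) *)
  (E0 (lam / n%:R) (fun G : graph_on n => (X_count (Gam n) G)%:R : R)) @[n --> \oo] --> +oo ->
  (* E_0(L^2) = 1 + o(1) *)
  (E0 (lam / n%:R) (fun G : graph_on n => Lratio (lam / n%:R) (Gam n) G ^+ 2)) @[n --> \oo] --> (1 : R) ->
  (E0 (lam / n%:R) (fun G : graph_on n => I_Gam (Gam n) G : R)) @[n --> \oo] --> (0 : R).
Proof.
move=> lam0 hG hK _ hL.
pose a n := E0 (lam / n%:R) (fun G : graph_on n => Lratio (lam / n%:R) (Gam n) G ^+ 2).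
pose b n := (K n)%:R / Num.sqrt (n%:R : R).
have H1 : \forall n \near \oo, (0 < n)%N := nbhs_infty_gt 0.
have H2 : \forall n \near \oo, lam < n%:R.
  apply: filterS (nbhs_infty_gt (Num.bound lam)) => m hm.
  apply: lt_trans (archi_boundP (ltW lam0)) _; by rewrite ltr_nat.
have H3 : \forall n \near \oo, `|b n| < 1 / 2.
  have h : (0:R) < 1 / 2 by rewrite divr_gt0.
  exact: (@cvgr0_norm_lt _ _ _ _ _ b hK _ h).
apply: (squeeze_cvgr (f := fun _ => 0) (h := fun n => 8 * (a n - 1) + 8 * (b n ^+ 2))).
- near=> n.
  have n0 : (0 < n)%N by near: n; exact: H1.
  have nl : lam < n%:R by near: n; exact: H2.
  have bn : `|b n| < 1 / 2 by near: n; exact: H3.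
  have sq : 0 < Num.sqrt (n%:R : R) by rewrite sqrtr_gt0 ltr0n.
  have ssq : Num.sqrt (n%:R : R) ^+ 2 = n%:R by rewrite sqr_sqrtr // ler0n.
  have b0 : 0 <= b n by rewrite /b divr_ge0 ?ler0n // ltW.
  have nK : (2 * K n <= n)%N.
    have h1 : (K n)%:R < Num.sqrt (n%:R : R) / 2.
      move: bn; rewrite ger0_norm // /b ltr_pdivrMr // => h; lra.
    have h2 : 4 * (K n)%:R ^+ 2 < (n%:R : R).
      rewrite -ssq; have k0 : 0 <= (K n)%:R :> R by rewrite ler0n.
      move: h1 k0 sq; move: (Num.sqrt _) ((K n)%:R : R) => s k h1 k0 s0; nra.
    have : (4 * (K n * K n) < n)%N by rewrite -(ltr_nat R) !natrM -expr2.
    nia.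
  have := @bound_n R lam n (K n) (Gam n) (hG n) lam0 n0 nl nK.
  rewrite (_ : (K n)%:R ^+ 2 / n%:R = b n ^+ 2) //.
  by rewrite /b expr_div_n ssq.
- exact: cvg_cst.
- rewrite (_ : (0:R) = 8 * (1 - 1) + 8 * (0 ^+ 2)); last by rewrite subrr expr0n /= !mulr0 addr0.
  apply: cvgD.
    apply: cvgM; first exact: cvg_cst.
    by apply: cvgB => //; exact: cvg_cst.
  apply: cvgM; first exact: cvg_cst.
  rewrite expr2.
  have -> : (fun n => b n ^+ 2) = (fun n => b n * b n) by apply: funext => n; rewrite expr2.
  exact: cvgM.
Unshelve. all: by end_near.
Qed.
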